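(* The occupancy problem under the step transformation, with all tiles of size $1\times 1$, is solvable in polynomial time, regardless of which subset of the directions $\{N,E,S,W\}$ is permitted for steps. In particular, it is solvable in $O(|B|)$ time, where $|B|$ is the number of positions of the input board $B$.
   Context: A board is an $m\times n$ rectangular region of the square lattice, formally a partition $B=(O,W)$ of $\{(x,y): x\in\{1,\dots,m\}, y\in\{1,\dots,n\}\}$ into open locations $O$ and blocked locations $W$. A tile is a labeled unit square centered on an open location. A configuration $C=(B,P)$ consists of a board $B$ and a set $P$ of tiles, no two at the same location and none at a blocked location. A step in direction $d\in\{N,E,S,W\}$ transforms a configuration as follows: consider translating every tile by one unit in direction $d$; every tile whose translation would land on a blocked location is temporarily added to the blocked set, and this is repeated until no remaining tile's translation lands on a blocked location; then all remaining (non-blocked) tiles are translated by one unit in direction $d$ (if all tiles become blocked, the configuration is unchanged). $C\rightarrow_1 C'$ means one step (in a permitted direction) turns $C$ into $C'$, and $\rightarrow_*$ is the reflexive–transitive closure. The occupancy problem: given a configuration $C=(B,P)$ and a location $e$ of $B$, does there exist $C'=(B,P')$ with $C\rightarrow_* C'$ such that some tile of $P'$ is at location $e$? *)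

(* Defs.v *)
From mathcomp Require Import all_boot.
Set Implicit Arguments. Unset Strict Implicit. Unset Printing Implicit Defensive.

(* Locations are pairs (x, y) of naturals; the m x n board consists of  *)
(* the locations with 1 <= x <= m and 1 <= y <= n.  A board is given by *)
(* m, n and a predicate [op] of open locations (only its values on the  *)
(* board matter).  A configuration (set of 1x1 tiles) is given by the   *)
(* predicate [C] of occupied locations; tile labels play no role in the *)
(* step dynamics or in the occupancy question, so the set of occupied   *)
(* locations determines everything relevant.                            *)

Definition in_board (m n x y : nat) : bool :=
  (1 <= x <= m) && (1 <= y <= n).

Definition is_open (m n : nat) (op : nat -> nat -> bool) (x y : nat) : bool :=
  in_board m n x y && op x y.

Definition valid_config (m n : nat) (op C : nat -> nat -> bool) : Prop :=
  forall x y, C x y -> is_open m n op x y.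

Inductive dir := N | E | S | W.

(* translation by one unit; N = +y, S = -y, E = +x, W = -x.  Moving      *)
(* below coordinate 1 gives coordinate 0, which is off the board.       *)
Definition shift (d : dir) (x y : nat) : nat * nat :=
  match d with
  | N => (x, y.+1)
  | S => (x, y.-1)
  | E => (x.+1, y)
  | W => (x.-1, y)
  end.

Definition opp (d : dir) : dir :=
  match d with N => S | S => N | E => W | W => E end.

(* k rounds of the "temporarily blocked" iteration: a tile becomes      *)
(* stuck if its translation lands on a blocked location or on a tile    *)
(* that is already stuck.                                               *)
Fixpoint stuck (m n : nat) (op C : nat -> nat -> bool) (d : dir) (k : nat)
  (x y : nat) : bool :=
  match k with
  | 0 => false
  | k'.+1 =>
      C x y &&
      (let: (x', y') := shift d x y in
       ~~ is_open m n op x' y' || stuck m n op C d k' x' y')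
  end.

(* the iteration is monotone and stabilises after at most (#tiles) <=   *)
(* m*n rounds, so m*n+1 rounds compute the final stuck set              *)
Definition stuckF (m n : nat) (op C : nat -> nat -> bool) (d : dir)
  (x y : nat) : bool :=
  stuck m n op C d (m * n).+1 x y.

Definition step (m n : nat) (op : nat -> nat -> bool) (d : dir)
  (C : nat -> nat -> bool) : nat -> nat -> bool :=
  fun x y =>
    (C x y && stuckF m n op C d x y) ||
    (in_board m n x y &&
     let: (x0, y0) := shift (opp d) x y in
     C x0 y0 && ~~ stuckF m n op C d x0 y0).

Inductive reach (m n : nat) (op : nat -> nat -> bool) (D : dir -> bool)
  (C : nat -> nat -> bool) : (nat -> nat -> bool) -> Prop :=
  | reach_refl : reach m n op D C C
  | reach_step : forall C' d, reach m n op D C C' -> D d ->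
                 reach m n op D C (step m n op d C').

Definition occupiable (m n : nat) (op : nat -> nat -> bool) (D : dir -> bool)
  (C : nat -> nat -> bool) (ex ey : nat) : Prop :=
  exists C', reach m n op D C C' /\ C' ex ey.

(* Cost model: a unit-cost random access machine (additions and         *)
(* truncated subtractions only, indirect addressing).                  *)
Inductive instr :=
  | IConst (r k : nat)
  | IAdd (r a b : nat)
  | ISub (r a b : nat)
  | ILoad (r a : nat)
  | IStore (a r : nat)
  | IJz (r l : nat)
  | IJmp (l : nat)
  | IHalt.

Record state := State { pc : nat; regs : nat -> nat; mem : nat -> nat }.

Definition upd (f : nat -> nat) (i v : nat) : nat -> nat :=
  fun j => if j == i then v else f j.

(* instructions are fetched with [nth IHalt]: pc out of range = halt *)
Definition fetch (prog : seq instr) (s : state) : instr := nth IHalt prog (pc s).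

Definition step1 (prog : seq instr) (s : state) : option state :=
  let: State p R M := s in
  match fetch prog s with
  | IConst r k => Some (State p.+1 (upd R r k) M)
  | IAdd r a b => Some (State p.+1 (upd R r (R a + R b)) M)
  | ISub r a b => Some (State p.+1 (upd R r (R a - R b)) M)
  | ILoad r a => Some (State p.+1 (upd R r (M (R a))) M)
  | IStore a r => Some (State p.+1 R (upd M (R a) (R r)))
  | IJz r l => Some (State (if R r == 0 then l else p.+1) R M)
  | IJmp l => Some (State l R M)
  | IHalt => None
  end.

Fixpoint run (prog : seq instr) (k : nat) (s : state) : state :=
  match k with
  | 0 => s
  | k'.+1 => match step1 prog s with
             | Some s' => run prog k' s'
             | None => s
             end
  end.

Definition halted (prog : seq instr) (s : state) : bool :=
  if fetch prog s is IHalt then true else false.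

Definition halts_within (prog : seq instr) (t : nat) (M0 : nat -> nat)
  (o : nat) : Prop :=
  exists k, k <= t /\
    let s := run prog k (State 0 (fun _ => 0) M0) in
    halted prog s /\ regs s 0 = o.

(* Input encoding: M[0] = m, M[1] = n, M[2] = x_e, M[3] = y_e, and for   *)
(* the board location (x, y) the cell 4 + (x-1)*n + (y-1) holds         *)
(* 0 (blocked), 1 (open, empty) or 2 (open, occupied by a tile);        *)
(* all other cells hold 0.                                              *)
Definition cell_code (m n : nat) (op C : nat -> nat -> bool) (x y : nat) : nat :=
  if ~~ is_open m n op x y then 0 else if C x y then 2 else 1.

Definition input_mem (m n : nat) (op C : nat -> nat -> bool) (ex ey : nat)
  : nat -> nat :=
  fun a =>
    if a == 0 then m else
    if a == 1 then n else
    if a == 2 then ex else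
    if a == 3 then ey else
    if (4 <= a) && (a < 4 + m * n) then
      cell_code m n op C ((a - 4) %/ n).+1 ((a - 4) %% n).+1
    else 0.

(* Main.v *)
Require Import Defs.
From mathcomp Require Import all_boot zify.
Set Implicit Arguments. Unset Strict Implicit. Unset Printing Implicit Defensive.

Definition sh (d : dir) (p : nat * nat) : nat * nat := shift d p.1 p.2.
Definition openp m n op (p : nat * nat) : bool := is_open m n op p.1 p.2.

Inductive preach m n op (D : dir -> bool) : nat * nat -> nat * nat -> Prop :=
| pr_refl p : preach m n op D p p
| pr_step p d q : D d -> openp m n op (sh d p) -> preach m n op D (sh d p) q ->
    preach m n op D p q.

Lemma preach_snoc m n op D p q d : preach m n op D p q -> D d ->
  openp m n op (sh d q) -> preach m n op D p (sh d q).
Proof.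
elim=> [r|r d' r' Hd Ho _ IH] Hd2 Ho2.
- by apply: pr_step Hd2 Ho2 (pr_refl _ _ _ _ _).
- exact: pr_step Hd Ho (IH Hd2 Ho2).
Qed.

Lemma sh_opp m n op d p : openp m n op (sh d p) -> sh (opp d) (sh d p) = p.
Proof.
case: p => x y; rewrite /openp /is_open /in_board.
move=> /andP[/andP[/andP[H1 H2] /andP[H3 H4]] _].
case: d H1 H2 H3 H4 => /= H1 H2 H3 H4; congr pair; lia.
Qed.

Lemma sh_opp2 m n d q : in_board m n q.1 q.2 -> sh d (sh (opp d) q) = q.
Proof.
case: q => x y; rewrite /in_board.
move=> /andP[/andP[H1 H2] /andP[H3 H4]].
by case: d => /=; rewrite ?prednK.
Qed.

Lemma reach_trans m n op D C1 C2 C3 : reach m n op D C1 C2 -> reach m n op D C2 C3 ->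
  reach m n op D C1 C3.
Proof. move=> H1; elim=> [|C' d _ IH Hd] //; exact: reach_step IH Hd. Qed.

Lemma stuck_C m n op C d k x y : stuck m n op C d k x y -> C x y.
Proof. by case: k => //= k /andP[]. Qed.

Lemma necess m n op D C C' : reach m n op D C C' -> forall x y, C' x y ->
  exists t, C t.1 t.2 /\ preach m n op D t (x, y).
Proof.
elim=> [|C2 d _ IH Hd] x y.
- by move=> H; exists (x, y); split => //; apply: pr_refl.
- rewrite /step /stuckF.
  case/orP=> [/andP[H _]|]; first exact: IH.
  move=> /andP[Hb].
  have E := @sh_opp2 m n d (x, y) Hb.
  move: E; rewrite /sh /=.
  case: (shift (opp d) x y) => x0 y0 /= E /andP[H0 Hns].
  have Ho : openp m n op (sh d (x0, y0)).
    move: Hns; rewrite /= H0 /=.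
    rewrite /sh /=; case: (shift d x0 y0) => a b; rewrite negb_or negbK => /andP[]. done.
  have [t [Ct Pt]] := IH _ _ H0.
  exists t; split => //.
  have := preach_snoc Pt Hd Ho.
  by rewrite /sh /= E.
Qed.

Lemma stuck_notC m n op C d k x y : ~~ C x y -> stuck m n op C d k x y = false.
Proof. by case: k => //= k /negbTE ->. Qed.

Lemma suff m n op D p e : preach m n op D p e -> forall C : nat -> nat -> bool, C p.1 p.2 ->
  occupiable m n op D C e.1 e.2.
Proof.
elim=> [r|r d r' Hd Ho _ IH] C Cr.
- by exists C; split => //; apply: reach_refl.
- case Cr1: (C (sh d r).1 (sh d r).2); first by apply: IH.
  have Hst : step m n op d C (sh d r).1 (sh d r).2.
    rewrite /step; apply/orP; right.
    have Hb : in_board m n (sh d r).1 (sh d r).2 by move: Ho; rewrite /openp /is_open => /andP[].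
    rewrite Hb /=.
    have E := sh_opp Ho. rewrite /sh in E.
    move: E Cr1 Ho Hb; rewrite /openp /sh.
    case Es: (shift d r.1 r.2) => [a b] /= E Cr1 Ho Hb.
    rewrite E; move: IH Cr Es E; case: r => x y /= IH Cr Es E.
    rewrite Cr /= /stuckF /= Cr /= Es Ho /= stuck_notC //.
    by rewrite Cr1.
  have [C' [R1 R2]] := IH _ Hst.
  exists C'; split => //.
  apply: reach_trans R1.
  exact: reach_step (reach_refl _ _ _ _ _) Hd.
Qed.

Lemma occ_iff m n op D C ex ey : occupiable m n op D C ex ey <->
  exists t, C t.1 t.2 /\ preach m n op D t (ex, ey).
Proof.
split.
- by case=> C' [R H]; exact: necess R _ _ H.
- by case=> t [Ct P]; exact: (suff P Ct).
Qed.

Arguments upd f i v j /.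

Definition vis (mark endl : nat) : seq instr :=
  [:: ILoad 9 6; IJz 9 endl; ISub 8 9 10; IJz 8 mark; ISub 8 9 11; IJz 8 117;
      IJmp endl; IStore 6 14; IStore 3 6; IAdd 3 3 10; IStore 3 7; IAdd 3 3 10].

Definition prog (D : dir -> bool) : seq instr :=
  [:: IConst 8 1; ILoad 1 8; IConst 8 0; ILoad 12 8; IConst 2 4; IConst 10 1; IConst 15 0;
      IJz 12 11; IAdd 2 2 1; ISub 12 12 10; IJmp 7;
      IConst 8 2; ILoad 12 8; ISub 12 12 10; IConst 8 3; ILoad 5 8; IConst 4 3; IAdd 4 4 5;
      IJz 12 22; IAdd 4 4 1; ISub 12 12 10; IJmp 18;
      IConst 14 3; IAdd 13 14 1; IAdd 3 2 15; IConst 11 2;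
      ILoad 9 4; IJz 9 115; ISub 8 9 10; IJz 8 31; IJmp 117;
      IStore 4 14; IStore 3 4; IAdd 3 3 10; IStore 3 5; IAdd 3 3 10;
      ISub 8 3 2; IJz 8 115; ISub 3 3 10; ILoad 5 3; ISub 3 3 10; ILoad 4 3;
      IConst 8 (nat_of_bool (D N)); IJz 8 60; ISub 8 5 10; IJz 8 60; ISub 6 4 10; ISub 7 5 10] ++
  vis 55 60 ++
  [:: IConst 8 (nat_of_bool (D S)); IJz 8 78; ISub 8 1 5; IJz 8 78; IAdd 6 4 10; IAdd 7 5 10] ++
  vis 73 78 ++
  [:: IConst 8 (nat_of_bool (D E)); IJz 8 96; ISub 8 4 13; IJz 8 96; ISub 6 4 1; IAdd 7 5 15] ++
  vis 91 96 ++
  [:: IConst 8 (nat_of_bool (D W)); IJz 8 114; IAdd 6 4 1; ISub 8 2 6; IJz 8 114; IAdd 7 5 15] ++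
  vis 109 114 ++
  [:: IJmp 36; IConst 0 0; IHalt; IConst 0 1; IHalt].

Lemma prog_size D : size (prog D) = 119. Proof. by []. Qed.


Lemma run_S p k s : run p k.+1 s = match step1 p s with Some s' => run p k s' | None => s end.
Proof. by []. Qed.

Lemma run_none p k s : step1 p s = None -> run p k s = s.
Proof. by case: k => //= k ->. Qed.

Lemma run_add p k1 k2 s : run p (k1 + k2) s = run p k2 (run p k1 s).
Proof.
elim: k1 s => [|k1 IH] s //=.
case E: (step1 p s) => [s'|] //; by rewrite run_none.
Qed.

Definition within p K s (P : state -> Prop) := exists k, k <= K /\ P (run p k s).

Lemma within_done p K s (P : state -> Prop) : P s -> within p K s P.
Proof. by exists 0. Qed.

Lemma within_step p K s s' (P : state -> Prop) : step1 p s = Some s' -> within p K s' P -> within p K.+1 s P.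
Proof. move=> E [k [Hk HP]]; exists k.+1; split => //; by rewrite run_S E. Qed.

Lemma within_seq p K1 K2 s (P Q : state -> Prop) : within p K1 s P ->
  (forall s', P s' -> within p K2 s' Q) -> within p (K1 + K2) s Q.
Proof.
move=> [k1 [H1 HP]] H; have [k2 [H2 HQ]] := H _ HP.
exists (k1 + k2); split; first lia. by rewrite run_add.
Qed.

Lemma within_weak p K1 K2 s (P : state -> Prop) : K1 <= K2 -> within p K1 s P -> within p K2 s P.
Proof. move=> H [k [Hk HP]]; exists k; split => //; lia. Qed.

Lemma within_mono p K s (P Q : state -> Prop) : (forall s, P s -> Q s) -> within p K s P -> within p K s Q.
Proof. move=> H [k [Hk HP]]; exists k; split => //; exact: H. Qed.




Section Main.
Variables (D : dir -> bool) (m n : nat) (op C : nat -> nat -> bool) (ex ey : nat).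
Hypothesis Hval : valid_config m n op C.
Hypothesis He : in_board m n ex ey.

Definition ee := (ex, ey).
Definition M0 := input_mem m n op C ex ey.
Definition top := 4 + m * n.
Definition addr (p : nat * nat) := 4 + (p.1 - 1) * n + (p.2 - 1).
Definition inb (p : nat * nat) := in_board m n p.1 p.2.
Definition code (p : nat * nat) := cell_code m n op C p.1 p.2.

Lemma n_pos : 0 < n.
Proof. move: He; rewrite /in_board; lia. Qed.

Lemma inbP p : inb p -> [/\ 1 <= p.1, p.1 <= m, 1 <= p.2 & p.2 <= n].
Proof. by rewrite /inb /in_board => /andP[/andP[? ?] /andP[? ?]]; split. Qed.

Lemma addr_lt p : inb p -> 4 <= addr p < top.
Proof.
case/inbP => H1 H2 H3 H4; rewrite /addr /top.
have: (p.1 - 1) * n + n <= m * n.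
  by rewrite -[X in _ + X]mul1n -mulnDl leq_mul2r; apply/orP; right; lia.
move: ((p.1 - 1) * n) => X; lia.
Qed.

Lemma addr_div p : inb p -> (addr p - 4) %/ n = p.1 - 1 /\ (addr p - 4) %% n = p.2 - 1.
Proof.
case/inbP => H1 H2 H3 H4; rewrite /addr.
have -> : 4 + (p.1 - 1) * n + (p.2 - 1) - 4 = (p.1 - 1) * n + (p.2 - 1) by rewrite -addnA addKn.
rewrite divnMDl ?n_pos // modnMDl divn_small ?modn_small; lia.
Qed.

Lemma addr_inj p q : inb p -> inb q -> addr p = addr q -> p = q.
Proof.
case: p => x y; case: q => x' y' Hp Hq E.
have [A1 A2] := addr_div Hp; have [B1 B2] := addr_div Hq.
case/inbP: Hp => /= ????; case/inbP: Hq => /= ????.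
move: A1 A2 B1 B2; rewrite E => -> -> /= A B.
congr pair; lia.
Qed.

Lemma M0_addr p : inb p -> M0 (addr p) = code p.
Proof.
move=> Hp; have [A1 A2] := addr_div Hp; have /andP[L1 L2] := addr_lt Hp.
rewrite /M0 /input_mem.
have -> : (addr p == 0) = false by apply/eqP; lia.
have -> : (addr p == 1) = false by apply/eqP; lia.
have -> : (addr p == 2) = false by apply/eqP; lia.
have -> : (addr p == 3) = false by apply/eqP; lia.
rewrite L1 /=; move: L2; rewrite /top => -> /=.
rewrite A1 A2 /code; case/inbP: Hp => ????.
have -> : (p.1 - 1).+1 = p.1 by lia.
by have -> : (p.2 - 1).+1 = p.2 by lia.
Qed.

Lemma mem_map_addr V q : (forall p, p \in V -> inb p) -> inb q ->
  (addr q \in map addr V) = (q \in V).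
Proof.
move=> HV Hq; apply/mapP/idP => [[p Hp E]|H]; last by exists q.
by rewrite (addr_inj Hq (HV _ Hp) E).
Qed.

Lemma size_board V : uniq V -> (forall p, p \in V -> inb p) -> size V <= m * n.
Proof.
move=> U HV.
have U' : uniq (map addr V).
  rewrite map_inj_in_uniq // => p q Hp Hq; apply: addr_inj; exact: HV.
have := uniq_leq_size U' (s2 := iota 4 (m * n)).
rewrite size_map size_iota; apply => a /mapP[p Hp ->].
rewrite mem_iota; have := addr_lt (HV _ Hp); rewrite /top; lia.
Qed.


Definition P := prog D.
Ltac kill := case: ifP => [/eqP ?|_]; first lia.
Definition MemOK (V stk : seq (nat * nat)) (M : nat -> nat) :=
  (forall a, a < top -> M a = if a \in map addr V then 3 else M0 a) /\
  (forall i, i < size stk -> M (top + 2 * i) = addr (nth (0,0) stk i) /\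
                            M (top + 2 * i).+1 = (nth (0,0) stk i).2).
Definition AInv (V stk : seq (nat * nat)) :=
  [/\ uniq V, (forall p, p \in V -> [/\ inb p, code p = 1 & preach m n op D p ee]),
      {subset stk <= V} & ee \in V].
Definition idx d := match d with N => 0 | S => 1 | E => 2 | W => 3 end.
Definition prd d p := sh (opp d) p.
Definition closedX (V stk : seq (nat * nat)) cur j := forall p d, p \in V -> p \notin stk -> D d ->
  (p = cur -> idx d < j) -> openp m n op (prd d p) -> prd d p \in V.
Definition closed (V stk : seq (nat * nat)) := forall p d, p \in V -> p \notin stk -> D d ->
  openp m n op (prd d p) -> prd d p \in V.
Definition CR (R : nat -> nat) :=
  [/\ R 1 = n, R 2 = top, R 10 = 1, R 11 = 2 & [/\ R 13 = 3 + n, R 14 = 3 & R 15 = 0]].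
Definition Found s := [/\ halted P s, regs s 0 = 1 & exists t, C t.1 t.2 /\ preach m n op D t ee].
Definition mu (V stk : seq (nat * nat)) := 2 * (m * n - size V) + size stk.
Definition BSt L (V stk : seq (nat * nat)) (cur : nat * nat) (j : nat) (s : state) :=
  [/\ pc s = L, CR (regs s), regs s 3 = top + 2 * size stk, regs s 4 = addr cur &
     [/\ regs s 5 = cur.2, MemOK V stk (Defs.mem s), AInv V stk, cur \in V & closedX V stk cur j]].

Lemma code_cases p : [\/ code p = 0 /\ ~~ openp m n op p,
                         code p = 1 /\ openp m n op p /\ ~~ C p.1 p.2 |
                         code p = 2 /\ openp m n op p /\ C p.1 p.2].
Proof.
rewrite /code /cell_code /openp.
case: (is_open m n op p.1 p.2) => /=; last by constructor 1.
by case: (C p.1 p.2); [constructor 3 | constructor 2].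
Qed.

Lemma memread V stk M q : MemOK V stk M -> AInv V stk -> inb q ->
  M (addr q) = if q \in V then 3 else code q.
Proof.
move=> [MB _] [_ HV _ _] Hq.
have /andP[_ L] := addr_lt Hq.
rewrite MB // mem_map_addr //; last by move=> p /HV [].
by case: (q \in V) => //; rewrite M0_addr.
Qed.

Lemma push_mem V stk M q : MemOK V stk M -> inb q ->
  MemOK (q :: V) (rcons stk q)
   (upd (upd (upd M (addr q) 3) (top + 2 * size stk) (addr q)) (top + 2 * size stk + 1) q.2).
Proof.
move=> [MB MS] Hq; have /andP[_ L] := addr_lt Hq; split.
- move=> a Ha /=.
  have -> : (a == top + 2 * size stk + 1) = false by apply/eqP; lia.
  have -> : (a == top + 2 * size stk) = false by apply/eqP; lia.
  rewrite inE MB //; by case: (a == addr q).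
- move=> i; rewrite size_rcons ltnS leq_eqVlt => /orP[/eqP ->|Hi] /=.
  + rewrite nth_rcons ltnn !eqxx /=; split; first by kill.
    by rewrite addn1 eqxx.
  + rewrite nth_rcons Hi.
    have [A B] := MS _ Hi.
    by split; do 3 kill.
Qed.

Lemma idx_inj d d' : idx d = idx d' -> d = d'.
Proof. by case: d; case: d'. Qed.

Lemma cl_skip V stk cur j d : closedX V stk cur j -> idx d = j ->
  (D d -> openp m n op (prd d cur) -> prd d cur \in V) -> closedX V stk cur j.+1.
Proof.
move=> H Hj H' p d' Hp Hs Hd Hc Ho.
case: (boolP (p == cur)) => [/eqP Ec|Nc].
- have := Hc Ec; rewrite ltnS leq_eqVlt => /orP[/eqP E|Lt].
  + have Edd : d' = d by apply: idx_inj; rewrite E Hj.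
    by subst; apply: H'.
  + by apply: H => // _.
- by apply: H => // Ec; rewrite Ec eqxx in Nc.
Qed.

Lemma cl_push V stk cur j q : closedX V stk cur j -> closedX (q :: V) (rcons stk q) cur j.
Proof.
move=> H p d; rewrite inE mem_rcons inE negb_or => /orP[/eqP->|Hp]; first by rewrite eqxx.
move=> /andP[_ Hs] Hd Hc Ho; by rewrite inE (H p d) ?orbT.
Qed.

Lemma cl_pop V stk p : closed V (rcons stk p) -> closedX V stk p 0.
Proof.
move=> H p' d Hp Hs Hd Hc Ho.
case: (boolP (p' == p)) => [/eqP E|Ne]; first by have := Hc E.
apply: H => //; by rewrite mem_rcons inE negb_or Ne.
Qed.

Lemma cl_end V stk cur : closedX V stk cur 4 -> closed V stk.
Proof. move=> H p d Hp Hs Hd Ho; apply: H => // _; by case: (d). Qed.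

Lemma cur_open V stk cur : AInv V stk -> cur \in V -> openp m n op cur.
Proof.
move=> [_ HV _ _] /HV [_ Hc _]; move: Hc.
by case: (code_cases cur) => [[->]|[_ []]|[->]].
Qed.

Lemma ainv_push V stk cur q d : AInv V stk -> cur \in V -> D d -> prd d cur = q -> inb q ->
  q \notin V -> code q = 1 -> AInv (q :: V) (rcons stk q).
Proof.
move=> [U HV Hs He'] Hc Hd Hp Hq Nq Cq; split.
- by rewrite /= Nq U.
- move=> p; rewrite inE => /orP[/eqP->|/HV //]; split => //.
  have Hcur := HV _ Hc; case: Hcur => Hcb _ Pc.
  have Eq : sh d q = cur by rewrite -Hp /prd; exact: (@sh_opp2 m n).
  apply: (pr_step Hd); rewrite Eq //; exact: (@cur_open V stk).
- by move=> p; rewrite mem_rcons !inE => /orP[->|/Hs ->]; rewrite ?orbT.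
- by rewrite inE He' orbT.
Qed.

Lemma mu_push V stk q : AInv V stk -> inb q -> q \notin V -> mu (q :: V) (rcons stk q) <= mu V stk.
Proof.
move=> [U HV _ _] Hq Nq.
have : size (q :: V) <= m * n.
  apply: size_board; first by rewrite /= Nq U.
  by move=> p; rewrite inE => /orP[/eqP->|/HV[]].
rewrite /mu size_rcons /=; lia.
Qed.

Lemma mk_bst L V stk cur j s : pc s = L -> regs s 1 = n -> regs s 2 = top -> regs s 10 = 1 ->
  regs s 11 = 2 -> regs s 13 = 3 + n -> regs s 14 = 3 -> regs s 15 = 0 ->
  regs s 3 = top + 2 * size stk -> regs s 4 = addr cur -> regs s 5 = cur.2 ->
  MemOK V stk (Defs.mem s) -> AInv V stk -> cur \in V -> closedX V stk cur j -> BSt L V stk cur j s.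
Proof. by move=> *; split => //; split. Qed.

Ltac rw := repeat match goal with
 | H : ?R ?k = _ |- context [?R ?k] => is_var R; rewrite H
 | H : code ?q = _ |- context [code ?q] => rewrite H
 | H : M0 ?q = _ |- context [M0 ?q] => rewrite H
 | H : (?a == ?b) = _ |- context [?a == ?b] => rewrite H
 end.
Ltac st := eapply within_step; [simpl; rw; simpl; reflexivity|].

Lemma visit_ok b d V stk cur q s :
  [|| b == 48, b == 66, b == 84 | b == 102] ->
  pc s = b -> CR (regs s) -> regs s 3 = top + 2 * size stk -> regs s 4 = addr cur ->
  regs s 5 = cur.2 -> regs s 6 = addr q -> regs s 7 = q.2 -> inb q -> prd d cur = q -> D d ->
  MemOK V stk (Defs.mem s) -> AInv V stk -> cur \in V -> closedX V stk cur (idx d) ->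
  within P 9 s (fun s' => Found s' \/ exists V' stk',
      BSt (b + 12) V' stk' cur (idx d).+1 s' /\ mu V' stk' <= mu V stk).
Proof.
move=> Hb; case: s => p R M /= Hp [R1 R2 R10 R11 [R13 R14 R15]] R3 R4 R5 R6 R7 Hq Hpr Hd HM HI Hc Hcl.
have Hv := memread HM HI Hq.
have Hcb : inb cur by case: HI => _ HV _ _; case: (HV _ Hc).
have Hedge : sh d q = cur by rewrite -Hpr /prd; exact: (@sh_opp2 m n).
case: (boolP (q \in V)) => K1.
- rewrite K1 in Hv.
  case/or4P: Hb => /eqP Eb; subst p b; do 7 st; apply: within_done; right; exists V, stk.
  1-4: split => //; apply: mk_bst => //; try (by simpl; rw).
  1-4: apply: cl_skip => //.
  1-4: by rewrite Hpr.
rewrite (negbTE K1) in Hv.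
case: (code_cases q) => [[K2 Ko]|[K2 [Ko KC]]|[K2 [Ko KC]]].
- case/or4P: Hb => /eqP Eb; subst p b; do 2 st; apply: within_done; right; exists V, stk.
  1-4: split => //; apply: mk_bst => //; try (by simpl; rw).
  1-4: apply: cl_skip => //.
  1-4: by rewrite Hpr (negbTE Ko).
- case/or4P: Hb => /eqP Eb; subst p b; do 9 st; apply: within_done; right; exists (q :: V), (rcons stk q).
  1-4: split; last by apply: mu_push.
  1-4: apply: mk_bst => //; try (by simpl; rw).
  1-20: first [ by rewrite /= size_rcons; lia
              | exact: push_mem
              | exact: (ainv_push HI Hc Hd Hpr Hq K1 K2)
              | by rewrite inE Hc orbT
              | (apply: cl_skip; [exact: cl_push | done | by rewrite Hpr inE eqxx])].
- case/or4P: Hb => /eqP Eb; subst p b; do 7 st; apply: within_done; left.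
  1-4: split => //; exists q; split => //.
  1-4: apply: (pr_step Hd); rewrite Hedge; [exact: (cur_open HI Hc)|].
  1-4: by case: HI => _ HV _ _; case: (HV _ Hc).
Qed.

Lemma inb_open p : openp m n op p -> inb p.
Proof. by rewrite /openp /is_open => /andP[]. Qed.

Lemma arN p : inb p -> if p.2 - 1 == 0 then is_true (~~ openp m n op (prd N p))
                      else inb (prd N p) /\ addr (prd N p) = addr p - 1.
Proof.
case: p => x y /inbP /= [H1 H2 H3 H4]; rewrite /prd /sh /= -?subn1.
case: ifP => [/eqnP Hy|/negbT/eqnP Hy].
- by apply/negP => /inb_open /inbP /= [_ _ ? _]; lia.
- split; first by rewrite /inb /in_board /=; lia.
  rewrite /addr /=; move: ((x - 1) * n) => Z; lia.
Qed.

Lemma arS p : inb p -> if n - p.2 == 0 then is_true (~~ openp m n op (prd S p))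
                      else inb (prd S p) /\ addr (prd S p) = addr p + 1.
Proof.
case: p => x y /inbP /= [H1 H2 H3 H4]; rewrite /prd /sh /= -?subn1.
case: ifP => [/eqnP Hy|/negbT/eqnP Hy].
- by apply/negP => /inb_open /inbP /= [_ _ _ ?]; lia.
- split; first by rewrite /inb /in_board /=; lia.
  rewrite /addr /=; move: ((x - 1) * n) => Z; lia.
Qed.

Lemma arE p : inb p -> if addr p - (3 + n) == 0 then is_true (~~ openp m n op (prd E p))
                      else inb (prd E p) /\ addr (prd E p) = addr p - n.
Proof.
case: p => x y /inbP /= [H1 H2 H3 H4]; rewrite /prd /sh /addr /= -?subn1.
case: x H1 H2 => [|[|X]] H1 H2 //.
- rewrite subnn mul0n.
  have -> : 4 + 0 + (y - 1) - (3 + n) = 0 by lia.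
  by rewrite eqxx; apply/negP => /inb_open /inbP /= [? _ _ _].
- have -> : X.+2 - 1 = X.+1 by lia.
  rewrite mulSn.
  have -> : (4 + (n + X * n) + (y - 1) - (3 + n) == 0) = false.
    by apply/eqnP; move: (X * n) => Z; lia.
  split; first by rewrite /inb /in_board /=; lia.
  rewrite /addr /=.
  have -> : X.+2 - 1 - 1 = X by lia.
  move: (X * n) => Z; lia.
Qed.

Lemma arW p : inb p -> if top - (addr p + n) == 0 then is_true (~~ openp m n op (prd W p))
                      else inb (prd W p) /\ addr (prd W p) = addr p + n.
Proof.
case: p => x y /inbP /= [H1 H2 H3 H4]; rewrite /prd /sh /addr /top /= -?subn1.
case: (ltnP x m) => Hx.
- have Hm : x.+1 * n <= m * n by rewrite leq_mul2r Hx orbT.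
  have Ex : (x - 1) * n + n = x * n.
    by rewrite -{2}(subnK H1) mulnDl mul1n.
  have -> : (4 + m * n - (4 + (x - 1) * n + (y - 1) + n) == 0) = false.
    apply/eqnP; move: Hm Ex; rewrite mulSn.
    move: ((x - 1) * n) (x * n) (m * n) => A B Cc; lia.
  split; first by rewrite /inb /in_board /=; lia.
  rewrite /addr /=.
  have -> : x.+1 - 1 = x by lia.
  move: Ex; move: ((x - 1) * n) (x * n) => A B; lia.
- have Exm : x = m by lia.
  subst x.
  have Ex : (m - 1) * n + n = m * n.
    by rewrite -{2}(subnK H1) mulnDl mul1n.
  have -> : (4 + m * n - (4 + (m - 1) * n + (y - 1) + n) == 0) = true.
    apply/eqnP; move: Ex; move: ((m - 1) * n) (m * n) => A B; lia.
  by apply/negP => /inb_open /inbP /= [_ ? _ _]; lia.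
Qed.


Definition BPost L V stk cur j s' :=
  Found s' \/ exists V' stk', BSt L V' stk' cur j s' /\ mu V' stk' <= mu V stk.

Ltac fin_same := apply: within_done; right; eexists; eexists; split; last exact: leqnn;
  apply: mk_bst => //; try (by simpl; rw).

Lemma blockN V stk cur s : BSt 42 V stk cur 0 s -> within P 22 s (BPost 60 V stk cur 1).
Proof.
case: s => p R M [/= Hp [R1 R2 R10 R11 [R13 R14 R15]] R3 R4 [R5 HM HI Hc Hcl]]; subst p.
have Hcb : inb cur by case: HI => _ HV _ _; case: (HV _ Hc).
case Dd: (D N).
- have := arN Hcb; case Hy: (cur.2 - 1 == 0) => Har.
  + do 4 st; fin_same; apply: (cl_skip (d := N)) => // _ Ho; by rewrite Ho in Har.
  + case: Har => Hq Ha; do 6 st.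
    apply: within_weak (visit_ok (b := 48) (d := N) (q := prd N cur) _ _ _ _ _ _ _ _ _ _ _ _ _ _ _) => //.
    by rewrite /prd /sh /= subn1.
- do 2 st; fin_same; apply: (cl_skip (d := N)) => //; by rewrite Dd.
Qed.

Lemma blockS V stk cur s : BSt 60 V stk cur 1 s -> within P 22 s (BPost 78 V stk cur 2).
Proof.
case: s => p R M [/= Hp [R1 R2 R10 R11 [R13 R14 R15]] R3 R4 [R5 HM HI Hc Hcl]]; subst p.
have Hcb : inb cur by case: HI => _ HV _ _; case: (HV _ Hc).
case Dd: (D S).
- have := arS Hcb; case Hy: (n - cur.2 == 0) => Har.
  + do 4 st; fin_same; apply: (cl_skip (d := S)) => // _ Ho; by rewrite Ho in Har.
  + case: Har => Hq Ha; do 6 st.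
    apply: within_weak (visit_ok (b := 66) (d := S) (q := prd S cur) _ _ _ _ _ _ _ _ _ _ _ _ _ _ _) => //.
    by rewrite /prd /sh /= addn1.
- do 2 st; fin_same; apply: (cl_skip (d := S)) => //; by rewrite Dd.
Qed.

Lemma blockE V stk cur s : BSt 78 V stk cur 2 s -> within P 22 s (BPost 96 V stk cur 3).
Proof.
case: s => p R M [/= Hp [R1 R2 R10 R11 [R13 R14 R15]] R3 R4 [R5 HM HI Hc Hcl]]; subst p.
have Hcb : inb cur by case: HI => _ HV _ _; case: (HV _ Hc).
case Dd: (D E).
- have := arE Hcb; case Hy: (addr cur - (3 + n) == 0) => Har.
  + do 4 st; fin_same; apply: (cl_skip (d := E)) => // _ Ho; by rewrite Ho in Har.
  + case: Har => Hq Ha; do 6 st.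
    apply: within_weak (visit_ok (b := 84) (d := E) (q := prd E cur) _ _ _ _ _ _ _ _ _ _ _ _ _ _ _) => //.
    by rewrite /prd /sh /= addn0.
- do 2 st; fin_same; apply: (cl_skip (d := E)) => //; by rewrite Dd.
Qed.

Lemma blockW V stk cur s : BSt 96 V stk cur 3 s -> within P 22 s (BPost 114 V stk cur 4).
Proof.
case: s => p R M [/= Hp [R1 R2 R10 R11 [R13 R14 R15]] R3 R4 [R5 HM HI Hc Hcl]]; subst p.
have Hcb : inb cur by case: HI => _ HV _ _; case: (HV _ Hc).
case Dd: (D W).
- have := arW Hcb; case Hy: (top - (addr cur + n) == 0) => Har.
  + do 5 st; fin_same; apply: (cl_skip (d := W)) => // _ Ho; by rewrite Ho in Har.
  + case: Har => Hq Ha; do 6 st.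
    apply: within_weak (visit_ok (b := 102) (d := W) (q := prd W cur) _ _ _ _ _ _ _ _ _ _ _ _ _ _ _) => //.
    by rewrite /prd /sh /= addn0.
- do 2 st; fin_same; apply: (cl_skip (d := W)) => //; by rewrite Dd.
Qed.


Definition LInv V stk s :=
  [/\ pc s = 36, CR (regs s), regs s 3 = top + 2 * size stk, MemOK V stk (Defs.mem s) &
      [/\ AInv V stk & closed V stk]].

Definition Fin s := halted P s /\ (regs s 0 = 1 <-> exists t, C t.1 t.2 /\ preach m n op D t ee).

Lemma no_path V : AInv V [::] -> closed V [::] -> ~ exists t, C t.1 t.2 /\ preach m n op D t ee.
Proof.
move=> [U HV Hs HeV] Hcl [t [Ct Pt]].
have key : forall p q, preach m n op D p q -> q = ee -> openp m n op p -> p \in V.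
  move=> p q; elim=> [r|r d r' Hd Ho _ IH] Eq Hop; first by rewrite Eq.
  have Hin := IH Eq Ho.
  have E := sh_opp Ho.
  rewrite -E; apply: Hcl => //; by rewrite /prd E.
have Hto : openp m n op t by have := Hval Ct.
have := HV _ (key _ _ Pt erefl Hto); case => _ Hc1 _.
by case: (code_cases t) => [[A _]|[_ [_ B]]|[A _]]; [rewrite Hc1 in A| rewrite Ct in B | rewrite Hc1 in A].
Qed.

Lemma pop_mem V stk0 p M : MemOK V (rcons stk0 p) M -> MemOK V stk0 M.
Proof.
move=> [MB MS]; split => // i Hi.
have := MS i; rewrite size_rcons nth_rcons Hi => H; apply: H; lia.
Qed.

Lemma Found_Fin s : Found s -> Fin s.
Proof. by case=> H1 H2 H3; split => //; rewrite H2. Qed.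


Lemma loop_ok k : forall V stk s, mu V stk < k -> LInv V stk s -> within P (100 * k) s Fin.
Proof.
elim: k => [|k IH] V stk s //.
case: s => p R M Hmu [/= Hp [R1 R2 R10 R11 [R13 R14 R15]] R3 HM [HI Hcl]]; subst p.
have [Estk|Nstk] := eqVneq stk [::].
- have Hz : (top + 2 * size stk - top == 0) = true by rewrite Estk /=; apply/eqnP; lia.
  apply: within_weak (_ : 3 <= _) _; first lia.
  do 3 st; apply: within_done; rewrite /Fin /=; split => //; split; first by [].
  rewrite Estk in HI Hcl; by have := no_path HI Hcl.
- case/lastP: stk Nstk Hmu R3 HM HI Hcl => [//|stk0 p] _ Hmu R3 HM HI Hcl.
  have Hz : (top + 2 * size (rcons stk0 p) - top == 0) = false.
    by rewrite size_rcons; apply/eqnP; lia.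
  have [MB MS] := HM.
  have [Hm1 Hm2] : M (top + 2 * size stk0) = addr (nth (0,0) (rcons stk0 p) (size stk0)) /\ M (top + 2 * size stk0).+1 = (nth (0,0) (rcons stk0 p) (size stk0)).2.
    by apply: MS; rewrite size_rcons.
  rewrite nth_rcons ltnn eqxx in Hm1 Hm2.
  have Hm1' : M (top + 2 * size (rcons stk0 p) - 1) = p.2.
    by rewrite size_rcons -Hm2; congr M; lia.
  have Hm2' : M (top + 2 * size (rcons stk0 p) - 1 - 1) = addr p.
    by rewrite size_rcons -Hm1; congr M; lia.
  clear Hm1 Hm2.
  have HI0 : AInv V stk0.
    case: HI => U HV Hs HeV; split => // x Hx; apply: Hs; by rewrite mem_rcons inE Hx orbT.
  have Hp : p \in V by case: HI => _ _ Hs _; apply: Hs; rewrite mem_rcons inE eqxx.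
  have H6 : within P 6 (State 36 R M) (BSt 42 V stk0 p 0).
    do 6 st; apply: within_done; apply: mk_bst => //; try (by simpl; rw).
    - by rewrite /= size_rcons; lia.
    - exact: pop_mem HM.
    - exact: cl_pop.
  have Hmu0 : mu V stk0 < k by move: Hmu; rewrite /mu size_rcons; lia.
  apply: within_weak (_ : 6 + (22 + (22 + (22 + (22 + (100 * k).+1)))) <= _) _; first lia.
  apply: within_seq H6 _ => s1 H1.
  apply: within_seq (blockN H1) _ => s2 [F2|[V2 [stk2 [H2 M2]]]];
    first by apply: within_done; exact: Found_Fin.
  apply: within_seq (blockS H2) _ => s3 [F3|[V3 [stk3 [H3 M3]]]];
    first by apply: within_done; exact: Found_Fin.
  apply: within_seq (blockE H3) _ => s4 [F4|[V4 [stk4 [H4 M4]]]];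
    first by apply: within_done; exact: Found_Fin.
  apply: within_seq (blockW H4) _ => s5 [F5|[V5 [stk5 [H5 M5]]]];
    first by apply: within_done; exact: Found_Fin.
  case: s5 H5 => p5 R' M' [/= Hp5 HCR R3' _ [_ HM' HI' _ Hcl']]; subst p5.
  eapply within_step; first (simpl; reflexivity).
  apply: (IH V5 stk5).
    apply: (leq_ltn_trans _ Hmu0); exact: leq_trans M5 (leq_trans M4 (leq_trans M3 M2)).
  split => //; split => //; exact: (cl_end Hcl').
Qed.


Lemma loop1 i : forall R M, R 12 = i -> R 1 = n -> R 10 = 1 ->
  within P (4 * i + 1) (State 7 R M) (fun s' => [/\ pc s' = 11, Defs.mem s' = M,
     regs s' 2 = R 2 + i * n & forall r, r != 2 -> r != 12 -> regs s' r = R r]).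
Proof.
elim: i => [|i IH] R M R12 R1 R10.
- st; apply: within_done; split => //=; first by rewrite addn0.
- apply: (@within_weak _ ((4 * i + 1).+4)); first lia.
  have Hz : (i.+1 == 0) = false by [].
  do 4 st.
  apply: within_mono (IH _ _ _ _ _) => [s' [A B C' F]|||].
  + split => //; first by rewrite C' /= mulSn; lia.
    by move=> r H1 H2; rewrite F //= (negbTE H1) (negbTE H2).
  + by rewrite /= subn1.
  + by rewrite /= R1.
  + by rewrite /= R10.
Qed.


Lemma loop2 i : forall R M, R 12 = i -> R 1 = n -> R 10 = 1 ->
  within P (4 * i + 1) (State 18 R M) (fun s' => [/\ pc s' = 22, Defs.mem s' = M,
     regs s' 4 = R 4 + i * n & forall r, r != 4 -> r != 12 -> regs s' r = R r]).
Proof.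
elim: i => [|i IH] R M R12 R1 R10.
- st; apply: within_done; split => //=; first by rewrite addn0.
- apply: (@within_weak _ ((4 * i + 1).+4)); first lia.
  have Hz : (i.+1 == 0) = false by [].
  do 4 st.
  apply: within_mono (IH _ _ _ _ _) => [s' [A B C' F]|||].
  + split => //; first by rewrite C' /= mulSn; lia.
    by move=> r H1 H2; rewrite F //= (negbTE H1) (negbTE H2).
  + by rewrite /= subn1.
  + by rewrite /= R1.
  + by rewrite /= R10.
Qed.


Lemma m_pos : 0 < m.
Proof. move: He; rewrite /in_board; lia. Qed.

Lemma preach_end p q : preach m n op D p q -> p = q \/ openp m n op q.
Proof. elim=> [r|r d r' Hd Ho _ IH]; [by left | right; case: IH => [<-|//]; exact: Ho]. Qed.

Lemma start_ok : within P (7 + ((4 * m + 1) + (7 + ((4 * (ex - 1) + 1) + (4 + (10 + 100 * (2 * (m * n))))))))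
   (State 0 (fun _ => 0) M0) Fin.
Proof.
have Hn := n_pos; have Hm := m_pos.
have [Hx1 Hx2 Hy1 Hy2] := @inbP ee He.
have H00 : M0 0 = m by [].
have H01 : M0 1 = n by [].
have H02 : M0 2 = ex by [].
have H03 : M0 3 = ey by [].
do 7 st.
apply: within_seq; first (apply: (@loop1 m); [by rewrite /= ?H00 | by rewrite /= ?H01 | by []]).
move=> [p1 R1' M1'] [/= Hp1 HM1 HR2 F1].
subst p1 M1'.
have R1 : R1' 1 = n by rewrite F1 //= ?H01.
have R10 : R1' 10 = 1 by rewrite F1.
have R15 : R1' 15 = 0 by rewrite F1.
rewrite /= in HR2.
do 7 st.
apply: within_seq; first (apply: (@loop2 (ex - 1)); [by rewrite /= ?H02 | by rewrite /= R1 | by rewrite /= R10]).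
move=> [p2 R2' M2'] [/= Hp2 HM2 HR4 F2].
subst p2 M2'.
have R1'' : R2' 1 = n by rewrite F2.
have R10' : R2' 10 = 1 by rewrite F2.
have R15' : R2' 15 = 0 by rewrite F2.
have R2'' : R2' 2 = top by rewrite F2 // HR2.
have R5' : R2' 5 = ey by rewrite F2 //= ?H03.
have R4' : R2' 4 = addr ee.
  rewrite HR4 /= ?H03 /addr /ee /=; move: Hy1; rewrite /ee /= => Hy1.
  move: ((ex - 1) * n) => Z; lia.
clear F1 F2 HR2 HR4 R1 R10 R15.
do 4 st.
have Hv : M0 (addr ee) = code ee by apply: M0_addr.
case: (code_cases ee) => [[K2 Ko]|[K2 [Ko KC]]|[K2 [Ko KC]]].
- do 3 st; apply: within_done; split => //=; split => // [[t [Ct Pt]]].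
  have [Et|Oe] := preach_end Pt.
  + subst t; exfalso; move/negP: Ko => Ko; apply: Ko; exact: (Hval Ct).
  + by exfalso; rewrite Oe in Ko.
- do 9 st.
  apply: (@within_weak _ (100 * (2 * (m * n)))); first lia.
  apply: (@loop_ok _ [:: ee] [:: ee]).
  + have : 0 < m * n by rewrite muln_gt0 Hm Hn.
    rewrite /mu /=; lia.
  + split => //=.
    * by rewrite /=; lia.
    * have M00 : MemOK [::] [::] M0 by split => // a _.
      exact: (@push_mem [::] [::] M0 ee M00 He).
    * split.
      - split => //=; try (by rewrite inE eqxx); try (by move=> p; rewrite inE).
        move=> p; rewrite inE => /eqP ->; split => //; exact: pr_refl.
      - by move=> p d; rewrite inE => ->.
- do 6 st; apply: within_done; apply: Found_Fin; split => //; exists ee; split => //; exact: pr_refl.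
Qed.

End Main.

Theorem theorem1 (D : dir -> bool) :
  exists (prog : seq instr) (c : nat),
  forall (m n : nat) (op C : nat -> nat -> bool) (ex ey : nat),
    valid_config m n op C ->
    in_board m n ex ey ->
    exists o : nat,
      halts_within prog (c * (m * n) + c) (input_mem m n op C ex ey) o /\
      (o = 1 <-> occupiable m n op D C ex ey).
Proof.
exists (prog D), 300 => m n op C ex ey Hval He.
have Hn := n_pos He; have Hm := m_pos He.
have Hx2 : ex <= m by move: He; rewrite /in_board; lia.
have [k [Hk [Hh Hiff]]] := start_ok D Hval He.
exists (regs (run (prog D) k (State 0 (fun _ => 0) (input_mem m n op C ex ey))) 0); split.
- exists k; split; last by split.
  have : m <= m * n by rewrite leq_pmulr.
  move: Hk Hx2; rewrite /=; move: (m * n) => Z; lia.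
- by rewrite Hiff occ_iff.
Qed.
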